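(* Let $d>0$, let $\ell$ be a certified lower bound with certificate matrix $\Lambda$, and suppose $f(d,\ell)=1$. Suppose $j\in\{1,\dots,m\}$ satisfies $0<a_j^\top y(d,\ell)-u_j\le\gamma_j(d,\ell)$. Define $$\ell^{(1)}:=\ell-\frac{2(t_j(d,\ell)-v_j(\ell))}{d_j\gamma_j(d,\ell)^2}e_j .$$ Then $\ell^{(1)}$ is a certified lower bound with certificate matrix $\Lambda$, $a_j^\top y(d,\ell^{(1)})=u_j$, and $$f(d,\ell^{(1)})=1-\Big(\frac{a_j^\top y(d,\ell)-u_j}{\gamma_j(d,\ell)}\Big)^2<1 .$$
   Context: Standing assumption: $A=[a_1|\cdots|a_m]\in\mathbb{R}^{n\times m}$ has columns of unit Euclidean norm and $\{A\lambda:\lambda\ge0\}=\mathbb{R}^n$; $u\in\mathbb{R}^m$. $D=\mathrm{diag}(d)$; $r(\ell)=\tfrac12(u+\ell)$, $v(\ell)=\tfrac12(u-\ell)$, $B(d)=ADA^\top$, $y(d,\ell)=B(d)^{-1}ADr(\ell)$, $t(d,\ell)=A^\top y(d,\ell)-r(\ell)$, $f(d,\ell)=v(\ell)^\top Dv(\ell)-t(d,\ell)^\top Dt(d,\ell)$, $\gamma_i(d,\ell)=\sqrt{f(d,\ell)a_i^\top B(d)^{-1}a_i}$ when $f(d,\ell)>0$. $\ell$ is a certified lower bound with certificate matrix $\Lambda\in\mathbb{R}^{m\times m}$ if $A\Lambda=-A$, $\Lambda\ge0$, $-\Lambda^\top u\ge\ell$. *)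

(* Defs.v *)
From HB Require Import structures.
From mathcomp Require Import all_boot all_order all_algebra.
Set Implicit Arguments. Unset Strict Implicit. Unset Printing Implicit Defensive.
Import Order.TTheory GRing.Theory Num.Theory.
Local Open Scope ring_scope.

Section Defs.
Variables (R : rcfType) (n m : nat).
Implicit Types (A : 'M[R]_(n, m)) (u d l : 'cV[R]_m).

Definition acol A (i : 'I_m) : 'cV[R]_n := col i A.

Definition unit_columns A : Prop :=
  forall i : 'I_m, \sum_(k < n) (A k i) ^+ 2 = 1.

Definition pos_spanning A : Prop :=
  forall x : 'cV[R]_n, exists lam : 'cV[R]_m,
    (forall i, 0 <= lam i 0) /\ A *m lam = x.

Definition Dmx d : 'M[R]_m := diag_mx d^T.
Definition rvec u l : 'cV[R]_m := 2^-1 *: (u + l).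
Definition vvec u l : 'cV[R]_m := 2^-1 *: (u - l).
Definition Bmx A d : 'M[R]_n := A *m Dmx d *m A^T.
Definition yvec A u d l : 'cV[R]_n := invmx (Bmx A d) *m (A *m Dmx d *m rvec u l).
Definition tvec A u d l : 'cV[R]_m := A^T *m yvec A u d l - rvec u l.
Definition fval A u d l : R :=
  ((vvec u l)^T *m Dmx d *m vvec u l) 0 0
  - ((tvec A u d l)^T *m Dmx d *m tvec A u d l) 0 0.
(* gamma_i(d,l) = sqrt (f(d,l) a_i^T B(d)^{-1} a_i)  (meaningful when f > 0) *)
Definition gammai A u d l (i : 'I_m) : R :=
  Num.sqrt (fval A u d l * (((acol A i)^T *m invmx (Bmx A d) *m acol A i) 0 0)).
Definition aTy A u d l (i : 'I_m) : R := ((acol A i)^T *m yvec A u d l) 0 0.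

Definition certified A u l (Lam : 'M[R]_m) : Prop :=
  A *m Lam = - A /\ (forall i j, 0 <= Lam i j) /\
  (forall i, l i 0 <= (- (Lam^T *m u)) i 0).

Definition evec (j : 'I_m) : 'cV[R]_m := delta_mx j 0.

End Defs.
Arguments evec {R m} j.

(* Main.v *)
Require Import Defs.
From HB Require Import structures.
From mathcomp Require Import all_boot all_order all_algebra.
From mathcomp Require Import ring lra.
Import Order.TTheory GRing.Theory Num.Theory.
Local Open Scope ring_scope.

Section Aux.
Context {R : rcfType} {n m : nat}.
Implicit Types (d x y z : 'cV[R]_m) (j : 'I_m) (k : R).

Definition qf (d : 'cV[R]_m) (x y : 'cV[R]_m) : R := ((x^T *m Dmx d *m y) 0 0).

Lemma qE d x y : qf d x y = \sum_i x i 0 * (d i 0 * y i 0).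
Proof.
rewrite /qf /Dmx mul_mx_diag mxE; apply: eq_bigr => i _; rewrite !mxE; ring.
Qed.

Lemma qsq d x y k : qf d (x + k *: y) (x + k *: y)
  = qf d x x + 2 * k * qf d x y + k ^+ 2 * qf d y y.
Proof.
rewrite !qE !mulr_sumr -!big_split /=; apply: eq_bigr => i _; rewrite !mxE; ring.
Qed.

Lemma qDZ d x y z k : qf d x (y + k *: z) = qf d x y + k * qf d x z.
Proof.
rewrite !qE !mulr_sumr -!big_split /=; apply: eq_bigr => i _; rewrite !mxE; ring.
Qed.

Lemma qe d x j : qf d x (evec j) = x j 0 * d j 0.
Proof.
rewrite qE (bigD1 j) //= big1 => [|i /negPf h]; rewrite !mxE ?eqxx ?h /=; ring.
Qed.

Lemma qAT (A : 'M[R]_(n, m)) d x (z : 'cV[R]_n) :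
  qf d x (A^T *m z) = ((A *m Dmx d *m x)^T *m z) 0 0.
Proof. by rewrite /qf !trmx_mul /Dmx tr_diag_mx !mulmxA. Qed.

Lemma De d j : Dmx d *m evec j = d j 0 *: evec j.
Proof.
apply/matrixP => i k; rewrite /Dmx mul_diag_mx !mxE.
by case: (eqVneq i j) => [->|_] /=; rewrite ?mulr0.
Qed.

Lemma ADe (A : 'M[R]_(n, m)) d j : A *m Dmx d *m evec j = d j 0 *: acol A j.
Proof. by rewrite -mulmxA De -scalemxAr /acol colE. Qed.

Lemma Bunit {A : 'M[R]_(n, m)} {d} : pos_spanning A -> (forall i, 0 < d i 0) ->
  Bmx A d \in unitmx.
Proof.
move=> hps hd; rewrite -row_free_unit -kermx_eq0; apply/eqP/row_matrixP => i.
rewrite row0; set x := row i _.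
have hx : x *m Bmx A d = 0 by apply/sub_kermxP; exact: row_sub.
have hxA : x *m A = 0.
  have e : (x *m Bmx A d *m x^T) 0 0 = \sum_k d k 0 * ((x *m A) 0 k) ^+ 2.
    have -> : x *m Bmx A d *m x^T = (x *m A) *m Dmx d *m (x *m A)^T.
      by rewrite trmx_mul /Bmx !mulmxA.
    rewrite /Dmx mul_mx_diag mxE.
    by apply: eq_bigr => k _; rewrite !mxE; ring.
  move: e; rewrite hx mul0mx mxE => /esym h0.
  have h1 : forall k : 'I_m, d k 0 * ((x *m A) 0 k) ^+ 2 = 0.
    move=> k; apply: (psumr_eq0P _ h0) => // p _.
    exact: mulr_ge0 (ltW (hd p)) (sqr_ge0 _).
  apply/matrixP => p k; rewrite ord1 [in RHS]mxE.
  by have := h1 k; move/eqP; rewrite mulf_eq0 sqrf_eq0 gt_eqF //= => /eqP.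
have [lam [_ hl]] := hps x^T.
have e : (x *m x^T) 0 0 = \sum_k (x 0 k) ^+ 2.
  by rewrite mxE; apply: eq_bigr => k _; rewrite !mxE.
move: e; rewrite -hl mulmxA hxA mul0mx mxE => /esym h0.
have h1 : forall k : 'I_n, (x 0 k) ^+ 2 = 0.
  by move=> k; apply: (psumr_eq0P _ h0) => // p _; exact: sqr_ge0.
apply/rowP => k; rewrite [in RHS]mxE; apply/eqP; rewrite -sqrf_eq0; exact/eqP/h1.
Qed.

End Aux.

Theorem lemma5 (R : rcfType) (n m : nat) (A : 'M[R]_(n, m)) (u : 'cV[R]_m)
  (d l : 'cV[R]_m) (Lam : 'M[R]_m) (j : 'I_m) :
  unit_columns A -> pos_spanning A ->
  (forall i, 0 < d i 0) ->
  certified A u l Lam ->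
  fval A u d l = 1 ->
  0 < aTy A u d l j - u j 0 <= gammai A u d l j ->
  let l1 := l - ((2 * (tvec A u d l j 0 - vvec u l j 0))
                   / (d j 0 * gammai A u d l j ^+ 2)) *: evec j in
  [/\ certified A u l1 Lam,
      aTy A u d l1 j = u j 0,
      fval A u d l1 = 1 - ((aTy A u d l j - u j 0) / gammai A u d l j) ^+ 2
    & 1 - ((aTy A u d l j - u j 0) / gammai A u d l j) ^+ 2 < 1].
Proof.
move=> _ hps hd [hc1 [hc2 hc3]] hf /andP [hpos hle] l1.
have hU := Bunit (d:=d) hps hd.
set Bi := invmx (Bmx A d).
set a := acol A j.
set beta := (a^T *m Bi *m a) 0 0.
set gam := gammai A u d l j.
set dj := d j 0.
have hgam : gam = Num.sqrt beta by rewrite /gam /gammai hf mul1r.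
have hgpos : 0 < gam by apply: lt_le_trans hle.
have hbpos : 0 < beta by rewrite -sqrtr_gt0 -hgam.
have hg2 : gam ^+ 2 = beta by rewrite hgam sqr_sqrtr // ltW.
have hdj : 0 < dj := hd j.
set c := (2 * (tvec A u d l j 0 - vvec u l j 0)) / (dj * gam ^+ 2).
have htj : tvec A u d l j 0 = aTy A u d l j - rvec u l j 0.
  rewrite /tvec /aTy !mxE; congr (_ - _); apply: eq_bigr => k _; rewrite !mxE //.
have hrv : rvec u l j 0 + vvec u l j 0 = u j 0.
  rewrite /rvec /vvec !mxE. by field.
have hdelta : tvec A u d l j 0 - vvec u l j 0 = aTy A u d l j - u j 0.
  by rewrite htj -hrv; ring.
have hcpos : 0 < c.
  rewrite /c hdelta; apply: divr_gt0; first by apply: mulr_gt0.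
  by apply: mulr_gt0 => //; apply: exprn_gt0.
have hl1 : l1 = l - c *: evec j by [].
set s := 2^-1 * c.
have r1 : rvec u l1 = rvec u l - s *: evec j.
  by apply/matrixP => i k; rewrite /rvec hl1 !mxE /s; ring.
have v1 : vvec u l1 = vvec u l + s *: evec j.
  by apply/matrixP => i k; rewrite /vvec hl1 !mxE /s; ring.
have y1 : yvec A u d l1 = yvec A u d l - (s * dj) *: (Bi *m a).
  rewrite /yvec r1 mulmxBr -(scalemxAr s) ADe scalerA mulmxBr -(scalemxAr (s * dj)) -/Bi.
  by [].
set w := A^T *m (Bi *m a).
have t1 : tvec A u d l1 = tvec A u d l + s *: (evec j + (- dj) *: w).
  rewrite /tvec y1 r1 mulmxBr -(scalemxAr (s * dj)) -/w.
  move: (A^T *m yvec _ _ _ _) (rvec u l) w (evec j) => M r W E.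
  by apply/matrixP => i k; rewrite !mxE; ring.
have ADt : A *m Dmx d *m tvec A u d l = 0.
  rewrite /tvec mulmxBr /yvec !mulmxA.
  have -> : A *m Dmx d *m A^T = Bmx A d by [].
  by rewrite mulmxV // mul1mx subrr.
have ADw : A *m Dmx d *m w = a.
  rewrite /w !mulmxA.
  have -> : A *m Dmx d *m A^T = Bmx A d by [].
  by rewrite mulmxV // mul1mx.
have qtw : qf d (tvec A u d l) w = 0 by rewrite qAT ADt trmx0 mul0mx mxE.
have qww : qf d w w = beta by rewrite qAT ADw /beta mulmxA.
have qew : qf d (evec j) w = dj * beta.
  rewrite qAT ADe /beta -mulmxA.
  have -> : (dj *: a)^T = dj *: a^T by apply/matrixP => p k; rewrite !mxE.
  by rewrite -scalemxAl mxE.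
have qee : qf d (evec j) (evec j) = dj by rewrite qe mxE !eqxx /= mul1r.
have hfv : fval A u d l = qf d (vvec u l) (vvec u l) - qf d (tvec A u d l) (tvec A u d l) by [].
split.
- split => //; split => // i.
  apply: le_trans (hc3 i); rewrite hl1 !mxE.
  have : 0 <= c * (evec j) i 0 by rewrite /evec mxE mulr_ge0 ?ler0n ?ltW.
  rewrite /evec mxE; lra.
- have e : forall (M N : 'M[R]_1) k, (M - k *: N) 0 0 = M 0 0 - k * N 0 0.
    by move=> *; rewrite !mxE.
  rewrite /aTy y1 mulmxBr -(scalemxAr (s * dj)) e -/a.
  rewrite (mulmxA a^T Bi a) -/beta -[(a^T *m yvec A u d l) 0 0]/(aTy A u d l j).
  rewrite /s /c hdelta -hg2; field.
  by apply/andP; split; rewrite gt_eqF.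
- have -> : fval A u d l1 = qf d (vvec u l1) (vvec u l1) - qf d (tvec A u d l1) (tvec A u d l1) by [].
  rewrite v1 t1 !qsq !qDZ qee qtw qew qww !qe.
  move: hf; rewrite hfv => hf.
  have -> : qf d (vvec u l) (vvec u l) = 1 + qf d (tvec A u d l) (tvec A u d l) by lra.
  rewrite /s /c hdelta -hg2 htj -hrv -/dj; field.
  by apply/andP; split; rewrite gt_eqF.
- have : 0 < ((aTy A u d l j - u j 0) / gam) ^+ 2 by apply: exprn_gt0; apply: divr_gt0.
  lra.
Qed.
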